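(* Let $d\ge 1$ be an integer and let $\mathcal{P}$ be the set of all (nonempty) integer partitions. As formal power series, $$\sum_{\lambda\in\mathcal{P}}t^{\mathrm{dif}_d(\lambda)}x^{\ell(\lambda)}y^{\lambda_1}=\frac{xy}{1-y-tx(1-y^d)-xy^d}.$$ In particular, $$\sum_{\lambda\in\mathcal{P}}t^{\mathrm{dif}_d(\lambda)}x^{\Gamma(\lambda)}=\frac{x}{1-x-tx(1-x^d)-x^{d+1}}.$$
   Context: A partition is a finite nonempty weakly decreasing sequence $\lambda=(\lambda_1,\ldots,\lambda_k)$ of positive integers; $\ell(\lambda)=k$ and $\lambda_1$ is the largest part. The perimeter is $\Gamma(\lambda)=\lambda_1+\ell(\lambda)-1$. $\mathrm{dif}_d(\lambda)=|\{i:1\le i<\ell(\lambda),\ \lambda_i-\lambda_{i+1}<d\}|$. *)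

(* Defs.v *)
From HB Require Import structures.
From mathcomp Require Import all_boot all_order all_algebra.
Set Implicit Arguments. Unset Strict Implicit. Unset Printing Implicit Defensive.
Import Order.TTheory GRing.Theory Num.Theory.

Definition is_partition (s : seq nat) : bool :=
  [&& s != [::], sorted geq s & all (fun p => 0 < p) s].

Definition plen (s : seq nat) : nat := size s.
Definition pmax (s : seq nat) : nat := head 0 s.
Definition perim (s : seq nat) : nat := pmax s + plen s - 1.
(* dif_d(lambda) = #{ i : 1 <= i < ell, lambda_i - lambda_{i+1} < d }
   (0-based indices i = 0 .. ell-2 here) *)
Definition dif (d : nat) (s : seq nat) : nat :=
  count (fun i => nth 0 s i - nth 0 s i.+1 < d) (iota 0 (size s).-1).

(* all sequences of length <= B with entries <= B (each listed once);
   every partition with ell <= B and lambda_1 <= B occurs in it *)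
Definition bseqs (B : nat) : seq (seq nat) :=
  flatten [seq [seq map (@nat_of_ord B.+1) (tval t) | t <- enum {: k.-tuple 'I_B.+1}]
          | k <- iota 0 B.+1].

(* f a b c = coefficient of t^a x^b y^c *)
Definition fps3 := nat -> nat -> nat -> int.

Definition add3 (f g : fps3) : fps3 := fun a b c => (f a b c + g a b c)%R.
Definition sub3 (f g : fps3) : fps3 := fun a b c => (f a b c - g a b c)%R.
Definition mul3 (f g : fps3) : fps3 := fun a b c =>
  (\sum_(i < a.+1) \sum_(j < b.+1) \sum_(k < c.+1)
     f i j k * g (a - i)%N (b - j)%N (c - k)%N)%R.
Definition mono3 (a0 b0 c0 : nat) : fps3 := fun a b c =>
  if [&& a == a0, b == b0 & c == c0] then 1%R else 0%R.
Definition one3 : fps3 := mono3 0 0 0.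
Definition T3 : fps3 := mono3 1 0 0.
Definition X3 : fps3 := mono3 0 1 0.
Definition Y3 : fps3 := mono3 0 0 1.
Definition pow3 (f : fps3) (n : nat) : fps3 := iter n (mul3 f) one3.

(* sum_{lambda in P} t^{dif_d lambda} x^{ell lambda} y^{lambda_1}:
   coefficient of t^a x^b y^c = #{lambda : dif_d = a, ell = b, lambda_1 = c} *)
Definition gf3 (d : nat) : fps3 := fun a b c =>
  Posz (count (fun s => [&& is_partition s, dif d s == a, plen s == b & pmax s == c])
         (bseqs (maxn b c))).

Definition den3 (d : nat) : fps3 :=
  sub3 (sub3 (sub3 one3 Y3) (mul3 (mul3 T3 X3) (sub3 one3 (pow3 Y3 d))))
       (mul3 X3 (pow3 Y3 d)).

(* f a b = coefficient of t^a x^b *)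
Definition fps2 := nat -> nat -> int.

Definition sub2 (f g : fps2) : fps2 := fun a b => (f a b - g a b)%R.
Definition mul2 (f g : fps2) : fps2 := fun a b =>
  (\sum_(i < a.+1) \sum_(j < b.+1) f i j * g (a - i)%N (b - j)%N)%R.
Definition mono2 (a0 b0 : nat) : fps2 := fun a b =>
  if (a == a0) && (b == b0) then 1%R else 0%R.
Definition one2 : fps2 := mono2 0 0.
Definition T2 : fps2 := mono2 1 0.
Definition X2 : fps2 := mono2 0 1.
Definition pow2 (f : fps2) (n : nat) : fps2 := iter n (mul2 f) one2.

(* sum_{lambda in P} t^{dif_d lambda} x^{Gamma lambda}:
   coefficient of t^a x^b = #{lambda : dif_d = a, Gamma = b}
   (Gamma = b forces ell <= b+1 and lambda_1 <= b+1) *)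
Definition gf2 (d : nat) : fps2 := fun a b =>
  Posz (count (fun s => [&& is_partition s, dif d s == a & perim s == b])
         (bseqs b.+1)).

Definition den2 (d : nat) : fps2 :=
  sub2 (sub2 (sub2 one2 X2) (mul2 (mul2 T2 X2) (sub2 one2 (pow2 X2 d))))
       (pow2 X2 d.+1).

(* Main.v *)
Require Import Defs.
From mathcomp Require Import all_boot all_order all_algebra.
From mathcomp Require Import zify.
From Stdlib Require Import FunctionalExtensionality.
Set Implicit Arguments. Unset Strict Implicit. Unset Printing Implicit Defensive.
Import GRing.Theory.

Lemma uniq_flatten_key (T K : eqType) (key : T -> K) (s : seq K) (L : K -> seq T) :
  uniq s -> (forall k, uniq (L k)) -> (forall k x, x \in L k -> key x = k) ->
  uniq (flatten (map L s)).
Proof.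
move=> Us UL HL; elim: s Us => //= k s IH /andP[ks Us].
rewrite cat_uniq UL IH // andbT; apply/hasPn => x /flatten_mapP[k' k's xk'] .
apply/negP => xk; move: (HL _ _ xk) (HL _ _ xk') => -> E.
by rewrite E k's in ks.
Qed.

Lemma count_uniq_eq (T : eqType) (P : pred T) s1 s2 :
  uniq s1 -> uniq s2 -> (forall x, P x -> x \in s1) -> (forall x, P x -> x \in s2) ->
  count P s1 = count P s2.
Proof.
move=> U1 U2 H1 H2; rewrite -!size_filter; apply: perm_size.
apply: uniq_perm; rewrite ?filter_uniq // => x; rewrite !mem_filter.
by case Px: (P x) => //=; rewrite H1 ?H2.
Qed.

Lemma bseqs_uniq B : uniq (bseqs B).
Proof.
apply: (@uniq_flatten_key _ _ size); first exact: iota_uniq.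
  move=> k; rewrite map_inj_uniq ?enum_uniq // => t1 t2 /(inj_map val_inj) E.
  exact: val_inj.
by move=> k x /mapP[t _ ->]; rewrite size_map size_tuple.
Qed.

Lemma mem_bseqs B s : size s <= B -> all (fun p => p <= B) s -> s \in bseqs B.
Proof.
move=> Hs Ha; apply/flatten_mapP; exists (size s); first by rewrite mem_iota.
apply/mapP; exists (map_tuple (fun p => @inord B p) (in_tuple s)); first by rewrite mem_enum.
rewrite /= -map_comp -[LHS]map_id; apply/eq_in_map => p ps /=.
by rewrite inordK // ltnS; apply: (allP Ha).
Qed.

Fixpoint parts (b m : nat) : seq (seq nat) :=
  if b is b'.+1 then flatten [seq [seq x :: s | s <- parts b' x] | x <- iota 1 m]
  else [:: [::]].
Definition Hs b c := [seq c :: s | s <- parts b c].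

Lemma geq_trans : transitive geq.
Proof. by move=> x y z /= h1 h2; apply: leq_trans h2 h1. Qed.

Lemma mem_parts b m s : (s \in parts b m) =
  [&& size s == b, sorted geq s, all (fun p => 0 < p) s & all (fun p => p <= m) s].
Proof.
elim: b m s => [|b IH] m s /=.
  by rewrite inE; case: s.
case: s => [|x t].
  by apply/flatten_mapP => -[y _ /mapP[]].
apply/flatten_mapP/idP.
  move=> [y]; rewrite mem_iota => /andP[y1 ym] /mapP[t' + [-> ->]].
  rewrite IH => /and4P[/eqP st srt pos al] /=.
  rewrite st eqxx path_sortedE; last exact: geq_trans.
  rewrite add1n ltnS in ym; rewrite al srt pos /= y1 ym /=; apply/allP => p /(allP al) pl; exact: leq_trans pl ym.
move=> /and4P[/= /eqP[st]]; rewrite path_sortedE; last exact: geq_trans.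
move=> /andP[al srt] /andP[x0 pos] /andP[xm _].
exists x; first by rewrite mem_iota x0 add1n ltnS.
by apply/map_f; rewrite IH st eqxx srt pos al.
Qed.

Lemma parts_uniq b m : uniq (parts b m).
Proof.
elim: b m => [|b IH] m //=.
apply: (@uniq_flatten_key _ _ (head 0)); first exact: iota_uniq.
  by move=> k; rewrite map_inj_uniq // => s1 s2 [].
by move=> k x /mapP[s _ ->].
Qed.

Lemma Hs_uniq b c : uniq (Hs b c).
Proof. by rewrite map_inj_uniq ?parts_uniq // => s1 s2 []. Qed.

Lemma dif_cons d x y s : dif d (x :: y :: s) = (x - y < d) + dif d (y :: s).
Proof.
rewrite /dif /=.
have -> : iota 1 (size s) = map (addn 1) (iota 0 (size s)) by rewrite -iotaDl.
by rewrite count_map.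
Qed.

Definition F d a b c : nat :=
  if (b == 0) || (c == 0) then 0 else count (fun s => dif d s == a) (Hs b.-1 c).
Definition Fm1 d a b m := if a is a'.+1 then F d a' b m else 0.

Lemma F0c d a c : F d a 0 c = 0. Proof. by []. Qed.
Lemma Fb0 d a b : F d a b 0 = 0. Proof. by rewrite /F orbT. Qed.

Lemma Frec d a b c : 0 < d -> 0 < b ->
  F d a b.+1 c = \sum_(0 <= m < c.+1) (if c - m < d then Fm1 d a b m else F d a b m).
Proof.
move=> d0; case: b => // b _.
case: c => [|c].
  by rewrite big_nat1 Fb0; case: ifP; case: a => //= *; rewrite Fb0.
have Fm0 : forall a b, Fm1 d a b 0 = 0 by move=> [|a'] b'; rewrite //= Fb0.
rewrite big_ltn // Fm0 Fb0 if_same add0n.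
rewrite /F /= /Hs map_flatten count_flatten -map_comp sumnE !big_map.
rewrite /index_iota subSS subn0.
apply: eq_big_seq => m; rewrite mem_iota => /andP[m1 _].
rewrite /= -map_comp count_map (gtn_eqF m1) /=.
case: ifP => Hd; first case: a => [|a]; rewrite /= /F /= ?(gtn_eqF m1) /= ?count_map.
- by apply/eqP; rewrite -leqn0 leqNgt -has_count; apply/hasPn => s _ /=; rewrite dif_cons Hd.
- by apply: eq_count => s /=; rewrite dif_cons Hd.
- by apply: eq_count => s /=; rewrite dif_cons Hd.
Qed.

Lemma is_partition_cons x t : is_partition (x :: t) =
  [&& 0 < x, sorted geq t, all (fun p => 0 < p) t & all (fun p => p <= x) t].
Proof.
rewrite /is_partition /= path_sortedE; last exact: geq_trans.
by case: (0 < x); case: (sorted geq t); case: (all _ t); case: (all _ t).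
Qed.

Lemma mem_Hs b c x t : (x :: t \in Hs b c) = (x == c) && (t \in parts b c).
Proof.
apply/mapP/andP => [[t' tt' [-> ->]]|[/eqP -> tp]]; first by [].
by exists t.
Qed.

Lemma Hs_nil b c : [::] \notin Hs b c.
Proof. by apply/mapP => -[]. Qed.

Lemma gf3E d a b c : gf3 d a b c = F d a b c.
Proof.
rewrite /gf3 /F; case: ifP => H.
  apply/eqP; rewrite eqz_nat -leqn0 leqNgt -has_count; apply/hasPn => s _.
  apply/negP; case: s => [|x t]; first by [].
  rewrite is_partition_cons => /and4P[/and4P[x0 _ _ _] _ /eqP sb /eqP sc].
  by move: H; rewrite -sb -sc (gtn_eqF x0).
case/norP: H => b0 c0.
congr Posz; transitivity (count (fun s => [&& is_partition s, dif d s == a, plen s == b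
   & pmax s == c]) (Hs b.-1 c)).
  apply: count_uniq_eq; [exact: bseqs_uniq|exact: Hs_uniq| |].
    case => [|x t]; first by [].
    rewrite is_partition_cons => /and4P[/and4P[x0 st pos al] _ /eqP sb /eqP sc].
    rewrite /plen /pmax /= in sb sc; subst.
    apply: mem_bseqs; first by rewrite leq_max leqnn.
    rewrite /= leq_max leqnn orbT /=; apply/allP => p /(allP al) px.
    by rewrite leq_max px orbT.
  case => [|x t]; first by [].
  rewrite is_partition_cons => /and4P[/and4P[x0 st pos al] _ /eqP sb /eqP sc].
  rewrite /plen /pmax /= in sb sc; subst.
  by rewrite mem_Hs eqxx mem_parts /= eqxx st pos al.
apply: eq_in_count => -[|x t]; first by rewrite (negbTE (Hs_nil _ _)).
rewrite mem_Hs mem_parts => /andP[/eqP -> /and4P[/eqP st srt pos al]].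
rewrite is_partition_cons srt pos al lt0n c0 /plen /pmax /= st eqxx.
by rewrite prednK ?lt0n // eqxx !andbT.
Qed.

Lemma gf2E d a b : gf2 d a b = (\sum_(0 <= c < b.+1) (F d a (b.+1 - c)%N c)%:Z)%R.
Proof.
rewrite /gf2 (@count_uniq_eq _ _ _ (flatten [seq Hs (b - c) c | c <- iota 1 b])).
  under eq_bigr do rewrite -natz.
  rewrite -natr_sum natz; congr Posz.
  rewrite count_flatten sumnE !big_map big_ltn // Fb0 add0n.
  rewrite /index_iota subSS subn0.
  apply: eq_big_seq => c; rewrite mem_iota => /andP[c1 cb].
  rewrite add1n ltnS in cb.
  rewrite /F subn_eq0 ltnNge cb (gtn_eqF c1) /= subSn //=.
  apply: eq_in_count => -[|x t]; first by rewrite (negbTE (Hs_nil _ _)).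
  rewrite mem_Hs mem_parts => /andP[/eqP -> /and4P[/eqP st srt pos al]].
  rewrite is_partition_cons srt pos al c1 /perim /plen /pmax /= st.
  by rewrite addnS subn1 /= subnKC // eqxx andbT.
- exact: bseqs_uniq.
- apply: (@uniq_flatten_key _ _ (head 0)); first exact: iota_uniq.
    by move=> k; apply: Hs_uniq.
  by move=> k x /mapP[s _ ->].
- case => [|x t]; first by [].
  rewrite is_partition_cons => /and3P[/and4P[x0 st pos al] _ /eqP sb].
  rewrite /perim /plen /pmax /= addnS subn1 /= in sb; subst.
  apply: mem_bseqs; first by rewrite /= ltnS leq_addl.
  apply/allP => p; rewrite inE => /orP[/eqP ->|/(allP al) px]; first by rewrite leqW // leq_addr.
  by rewrite (leq_trans px) // leqW // leq_addr.
- case => [|x t]; first by [].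
  rewrite is_partition_cons => /and3P[/and4P[x0 st pos al] _ /eqP sb].
  rewrite /perim /plen /pmax /= addnS subn1 /= in sb; subst.
  apply/flatten_mapP; exists x; first by rewrite mem_iota x0 add1n ltnS leq_addr.
  by rewrite mem_Hs eqxx mem_parts addKn eqxx st pos al.
Qed.

Section Alg.
Local Open Scope ring_scope.

Definition dl (x y : nat) : int := if x == y then 1 else 0.

Lemma sum_dl (n k : nat) (g : nat -> int) :
  \sum_(i < n.+1) dl (n - i)%N k * g i = if (k <= n)%N then g (n - k)%N else 0.
Proof.
rewrite /dl; case: (leqP k n) => H.
  rewrite (bigD1 (Ordinal (leq_ltn_trans (leq_subr k n) (ltnSn n)))) //=.
  rewrite subKn // eqxx mul1r big1 ?addr0 // => i /eqP ik.
  rewrite ifF ?mul0r //; apply/eqP => e; apply: ik; apply: val_inj => /=.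
  have := ltn_ord i; lia.
rewrite big1 // => i _; rewrite ifF ?mul0r //; apply/eqP => e.
have := ltn_ord i; lia.
Qed.

Lemma bool_test (i i' a : nat) : ((i' <= a)%N && (a - i' == i)%N) = (a == i + i')%N.
Proof. lia. Qed.

Lemma mul3_mono (f : fps3) i0 j0 k0 a b c :
  mul3 f (mono3 i0 j0 k0) a b c =
  if [&& (i0 <= a)%N, (j0 <= b)%N & (k0 <= c)%N] then f (a - i0)%N (b - j0)%N (c - k0)%N else 0.
Proof.
rewrite /mul3.
transitivity (\sum_(i < a.+1) dl (a - i)%N i0 * \sum_(j < b.+1) dl (b - j)%N j0 *
   \sum_(k < c.+1) dl (c - k)%N k0 * f i j k).
  apply: eq_bigr => i _; rewrite mulr_sumr; apply: eq_bigr => j _.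
  rewrite !mulr_sumr; apply: eq_bigr => k _.
  rewrite /mono3 /dl; case: eqP; case: eqP; case: eqP => /=;
  by rewrite ?mul0r ?mul1r ?mulr1 ?mulr0.
under eq_bigr => i _ do under eq_bigr => j _ do rewrite (sum_dl _ _ (f i j)).
under eq_bigr => i _ do rewrite (sum_dl _ _ (fun j => if (k0 <= c)%N then f i j (c - k0)%N else 0)).
rewrite (sum_dl _ _ (fun i => if (j0 <= b)%N then if (k0 <= c)%N then f i (b - j0)%N (c - k0)%N else 0 else 0)).
by case: (i0 <= a)%N; case: (j0 <= b)%N; case: (k0 <= c)%N.
Qed.

Lemma mul3_sub (f g h : fps3) a b c :
  mul3 f (sub3 g h) a b c = mul3 f g a b c - mul3 f h a b c.
Proof.
rewrite /mul3 /sub3 -sumrB; apply: eq_bigr => i _; rewrite -sumrB.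
apply: eq_bigr => j _; rewrite -sumrB; apply: eq_bigr => k _; exact: mulrBr.
Qed.

Lemma mono3_mul i j k i' j' k' :
  mul3 (mono3 i j k) (mono3 i' j' k') = mono3 (i + i') (j + j') (k + k').
Proof.
apply: functional_extensionality => a; apply: functional_extensionality => b;
apply: functional_extensionality => c.
rewrite mul3_mono /mono3.
by repeat (case: ifP => ?); try done; exfalso; lia.
Qed.

Lemma pow3Y n : pow3 Y3 n = mono3 0 0 n.
Proof.
elim: n => [|n IH] //=; rewrite -/(pow3 Y3 n) IH /Y3 mono3_mul //.
Qed.

Lemma mul3_subF (f g h : fps3) : mul3 f (sub3 g h) = sub3 (mul3 f g) (mul3 f h).
Proof.
apply: functional_extensionality => a; apply: functional_extensionality => b;
apply: functional_extensionality => c; exact: mul3_sub.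
Qed.

Lemma den3E d : den3 d = sub3 (sub3 (sub3 one3 Y3) (sub3 (mono3 1 1 0) (mono3 1 1 d))) (mono3 0 1 d).
Proof.
rewrite /den3 pow3Y /T3 /X3 /one3 !mono3_mul mul3_subF !mono3_mul /=.
by rewrite add0n.
Qed.


Lemma sum_eq (n k : nat) (g : nat -> int) :
  \sum_(0 <= i < n.+1) (if i == k then g i else 0) = if (k <= n)%N then g k else 0.
Proof.
rewrite big_mkord; case: (leqP k n) => H.
  rewrite (bigD1 (Ordinal (H : (k < n.+1)%N))) //= eqxx big1 ?addr0 // => i /eqP ik.
  rewrite ifF //; apply/eqP => e; apply: ik; exact: val_inj.
rewrite big1 // => i _; rewrite ifF //; apply/eqP => e.
have := ltn_ord i; lia.
Qed.

Lemma Sdiff (d c : nat) (A B : nat -> int) : (0 < d)%N ->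
  \sum_(0 <= m < c.+2) (if (c.+1 - m < d)%N then A m else B m)
  - \sum_(0 <= m < c.+1) (if (c - m < d)%N then A m else B m)
  = A c.+1 + (if (d <= c.+1)%N then B (c.+1 - d)%N - A (c.+1 - d)%N else 0).
Proof.
move=> d0; rewrite big_nat_recr //= subnn d0 addrC -addrA; congr (_ + _).
rewrite -sumrB.
rewrite (eq_big_nat _ _ (F2 := fun m => if (m == c.+1 - d)%N && (d <= c.+1)%N
          then B m - A m else 0)); last first.
  move=> m /andP[_ mc].
  by repeat (case: ifP => ?); rewrite ?subrr //; exfalso; lia.
case: (leqP d c.+1) => H.
  under eq_bigr do rewrite andbT.
  by rewrite sum_eq ifT //; lia.
by rewrite big1 // => m _; rewrite andbF.
Qed.

Lemma F1 d a c : F d a 1%N c = if (a == 0) && (0 < c)%N then 1%N else 0%N.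
Proof.
rewrite /F /= lt0n; case: (c == 0) => //=.
  by rewrite andbF.
by rewrite andbT addn0 /dif /= eq_sym; case: (a == 0).
Qed.

Lemma FrecZ d a b c : (0 < d)%N -> (0 < b)%N ->
  (F d a b.+1 c)%:Z = \sum_(0 <= m < c.+1)
     (if (c - m < d)%N then (Fm1 d a b m)%:Z else (F d a b m)%:Z).
Proof.
move=> d0 b0; rewrite Frec //.
under [RHS]eq_bigr => m _ do rewrite -fun_if -natz.
by rewrite -natr_sum natz.
Qed.

Lemma Fid d a l c : (0 < d)%N ->
  (F d a l c)%:Z - (if (0 < c)%N then (F d a l (c - 1)%N)%:Z else 0) -
  ((if (0 < a)%N && (0 < l)%N then (F d (a - 1)%N (l - 1)%N c)%:Z else 0) -
   (if [&& (0 < a)%N, (0 < l)%N & (d <= c)%N] then (F d (a - 1)%N (l - 1)%N (c - d)%N)%:Z else 0)) -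
  (if (0 < l)%N && (d <= c)%N then (F d a (l - 1)%N (c - d)%N)%:Z else 0)
  = if [&& a == 0%N, l == 1%N & c == 1%N] then 1 else 0.
Proof.
move=> d0.
case: l => [|[|l]].
- by rewrite ltnn !andbF !F0c if_same !subr0.
- rewrite subnn !F0c !if_same !subr0 !F1 /=.
  case: a => [|a] //=; case: c => [|[|c]] //=.
rewrite !ltn0Sn !andbT !subn1 /= andbF.
case: c => [|c].
  by rewrite !Fb0 !if_same !subr0.
rewrite (ltn0Sn c) /= FrecZ // FrecZ //.
rewrite Sdiff //.
case: a => [|a] /=; case: ifP => _; rewrite /=.
all: lia.
Qed.


Lemma main3 d a b c : (0 < d)%N -> mul3 (gf3 d) (den3 d) a b c = mul3 X3 Y3 a b c.
Proof.
move=> d0.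
rewrite den3E !mul3_sub /one3 /Y3 !mul3_mono !leq0n !subn0 /= !gf3E andbT Fid //.
rewrite /X3 /mono3; by repeat (case: ifP => ?); try done; exfalso; lia.
Qed.

Lemma mul2_mono (f : fps2) i0 j0 a b :
  mul2 f (mono2 i0 j0) a b =
  if (i0 <= a)%N && (j0 <= b)%N then f (a - i0)%N (b - j0)%N else 0.
Proof.
rewrite /mul2.
transitivity (\sum_(i < a.+1) dl (a - i)%N i0 * \sum_(j < b.+1) dl (b - j)%N j0 * f i j).
  apply: eq_bigr => i _; rewrite mulr_sumr; apply: eq_bigr => j _.
  rewrite /mono2 /dl; case: eqP; case: eqP => /=;
  by rewrite ?mul0r ?mul1r ?mulr1 ?mulr0.
under eq_bigr => i _ do rewrite (sum_dl _ _ (f i)).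
rewrite (sum_dl _ _ (fun i => if (j0 <= b)%N then f i (b - j0)%N else 0)).
by case: (i0 <= a)%N; case: (j0 <= b)%N.
Qed.

Lemma mul2_sub (f g h : fps2) a b :
  mul2 f (sub2 g h) a b = mul2 f g a b - mul2 f h a b.
Proof.
rewrite /mul2 /sub2 -sumrB; apply: eq_bigr => i _; rewrite -sumrB.
apply: eq_bigr => j _; exact: mulrBr.
Qed.

Lemma mono2_mul i j i' j' :
  mul2 (mono2 i j) (mono2 i' j') = mono2 (i + i') (j + j').
Proof.
apply: functional_extensionality => a; apply: functional_extensionality => b.
rewrite mul2_mono /mono2.
by repeat (case: ifP => ?); try done; exfalso; lia.
Qed.

Lemma pow2X n : pow2 X2 n = mono2 0 n.
Proof.
elim: n => [|n IH] //=; rewrite -/(pow2 X2 n) IH /X2 mono2_mul //.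
Qed.

Lemma mul2_subF (f g h : fps2) : mul2 f (sub2 g h) = sub2 (mul2 f g) (mul2 f h).
Proof.
apply: functional_extensionality => a; apply: functional_extensionality => b.
exact: mul2_sub.
Qed.

Lemma den2E d : den2 d = sub2 (sub2 (sub2 one2 X2) (sub2 (mono2 1 1) (mono2 1 d.+1))) (mono2 0 d.+1).
Proof.
by rewrite /den2 !pow2X /T2 /X2 /one2 !mono2_mul mul2_subF !mono2_mul /=.
Qed.


Definition Gh (h : nat -> nat -> int) n := \sum_(0 <= c < n.+1) h (n.+1 - c)%N c.

Lemma my_addn k n (G : nat -> int) :
  \sum_(k <= i < n) G i = \sum_(0 <= i < n - k) G (i + k)%N.
Proof. exact: (big_addn 0 n k). Qed.

Lemma Ksum (h : nat -> nat -> int) (h0 : forall x, h 0%N x = 0) (N k : nat) :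
  \sum_(0 <= c < N.+1) (if (k <= c)%N then h (N - c)%N (c - k)%N else 0)
  = if (k < N)%N then Gh h (N - k.+1) else 0.
Proof.
case: (ltnP k N) => H; last first.
  rewrite big_nat big1 // => c /andP[_ cN]; case: ifP => // kc.
  by have -> : (N - c = 0)%N by lia.
rewrite (big_cat_nat (n := k)) //=; last by lia.
have -> : \sum_(0 <= i < k) (if (k <= i)%N then h (N - i)%N (i - k)%N else 0) = 0.
  by rewrite big_nat big1 // => c /andP[_ ck]; rewrite leqNgt ck.
rewrite add0r my_addn.
have -> : (N.+1 - k = (N - k.+1).+2)%N by lia.
rewrite big_nat_recr //= /Gh.
have -> : (N - ((N - k.+1).+1 + k) = 0)%N by lia.
rewrite h0 if_same addr0; apply: eq_big_nat => c /andP[_ c1].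
rewrite ifT; last by rewrite leq_addl.
by rewrite addnK; congr h; lia.
Qed.


Lemma Ksum' (h : nat -> nat -> int) (h0 : forall x, h 0%N x = 0) (N k : nat) :
  \sum_(0 <= c < N) (if (k <= c)%N then h (N - c)%N (c - k)%N else 0)
  = if (k < N)%N then Gh h (N - k.+1) else 0.
Proof.
rewrite -Ksum // big_nat_recr //= subnn h0 if_same addr0 //.
Qed.

Lemma sum_if_const (n : nat) (P : bool) (g : nat -> int) :
  \sum_(0 <= c < n) (if P then g c else 0) = if P then \sum_(0 <= c < n) g c else 0.
Proof. by case: P => //; rewrite big1. Qed.

Lemma main2 d a b : (0 < d)%N -> mul2 (gf2 d) (den2 d) a b = X2 a b.
Proof.
move=> d0.
rewrite den2E !mul2_sub /one2 /X2 !mul2_mono !leq0n !subn0 /=.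
have gE : forall a n, gf2 d a n = Gh (fun l c => (F d a l c)%:Z) n by move=> *; rewrite gf2E.
rewrite !gE.
have E : \sum_(0 <= c < b.+1) (
  (F d a (b.+1 - c)%N c)%:Z - (if (0 < c)%N then (F d a (b.+1 - c)%N (c - 1)%N)%:Z else 0) -
  ((if (0 < a)%N && (0 < b.+1 - c)%N then (F d (a - 1)%N (b.+1 - c - 1)%N c)%:Z else 0) -
   (if [&& (0 < a)%N, (0 < b.+1 - c)%N & (d <= c)%N] then (F d (a - 1)%N (b.+1 - c - 1)%N (c - d)%N)%:Z else 0)) -
  (if (0 < b.+1 - c)%N && (d <= c)%N then (F d a (b.+1 - c - 1)%N (c - d)%N)%:Z else 0))
  = \sum_(0 <= c < b.+1) (if [&& a == 0%N, (b.+1 - c)%N == 1%N & c == 1%N] then 1 else 0).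
  by apply: eq_bigr => c _; apply: Fid.
rewrite !sumrB in E.
have T1 : \sum_(0 <= c < b.+1) (F d a (b.+1 - c)%N c)%:Z = Gh (fun l c => (F d a l c)%:Z) b by [].
have T2 : \sum_(0 <= c < b.+1) (if (0 < c)%N then (F d a (b.+1 - c)%N (c - 1)%N)%:Z else 0)
   = if (0 < b)%N then Gh (fun l c => (F d a l c)%:Z) (b - 1) else 0.
  by rewrite (Ksum' (h := fun l c => (F d a l c)%:Z)).
have T3 : \sum_(0 <= c < b.+1) (if (0 < a)%N && (0 < b.+1 - c)%N then (F d (a - 1)%N (b.+1 - c - 1)%N c)%:Z else 0)
   = if (0 < a)%N && (0 < b)%N then Gh (fun l c => (F d (a - 1)%N l c)%:Z) (b - 1) else 0.
  rewrite (eq_big_nat _ _ (F2 := fun c => if (0 < a)%N then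
      (if (0 <= c)%N then (F d (a - 1)%N (b - c)%N (c - 0)%N)%:Z else 0) else 0)); last first.
    move=> c /andP[_ cb]; have -> : (0 < b.+1 - c)%N by lia.
    by rewrite andbT subn0 (_ : (b.+1 - c - 1 = b - c)%N) //; lia.
  rewrite sum_if_const; case: (0 < a)%N => //; rewrite andTb.
  exact: (@Ksum (fun l c => (F d (a - 1)%N l c)%:Z) (fun x => erefl) b 0).
have T4 : \sum_(0 <= c < b.+1) (if [&& (0 < a)%N, (0 < b.+1 - c)%N & (d <= c)%N] then (F d (a - 1)%N (b.+1 - c - 1)%N (c - d)%N)%:Z else 0)
   = if (0 < a)%N && (d < b)%N then Gh (fun l c => (F d (a - 1)%N l c)%:Z) (b - d.+1) else 0.
  rewrite (eq_big_nat _ _ (F2 := fun c => if (0 < a)%N then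
      (if (d <= c)%N then (F d (a - 1)%N (b - c)%N (c - d)%N)%:Z else 0) else 0)); last first.
    move=> c /andP[_ cb]; have -> : (0 < b.+1 - c)%N by lia.
    rewrite (_ : (b.+1 - c - 1 = b - c)%N); last by lia.
    by case: (0 < a)%N; case: (d <= c)%N.
  rewrite sum_if_const; case: (0 < a)%N => //; rewrite andTb.
  exact: (@Ksum (fun l c => (F d (a - 1)%N l c)%:Z) (fun x => erefl) b d).
have T5 : \sum_(0 <= c < b.+1) (if (0 < b.+1 - c)%N && (d <= c)%N then (F d a (b.+1 - c - 1)%N (c - d)%N)%:Z else 0)
   = if (d < b)%N then Gh (fun l c => (F d a l c)%:Z) (b - d.+1) else 0.
  rewrite (eq_big_nat _ _ (F2 := fun c =>
      (if (d <= c)%N then (F d a (b - c)%N (c - d)%N)%:Z else 0))); last first.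
    move=> c /andP[_ cb]; have -> : (0 < b.+1 - c)%N by lia.
    rewrite (_ : (b.+1 - c - 1 = b - c)%N); last by lia.
    by case: (d <= c)%N.
  by apply: (Ksum (h := fun l c => (F d a l c)%:Z)).
have T6 : \sum_(0 <= c < b.+1) (if [&& a == 0%N, (b.+1 - c)%N == 1%N & c == 1%N] then 1 else 0)
   = mono2 0 1 a b.
  rewrite (eq_big_nat _ _ (F2 := fun c => if c == 1%N then
      (if (a == 0%N) && (b == 1%N) then (1 : int) else 0) else 0)); last first.
    by move=> c /andP[_ cb]; repeat (case: ifP => ?); try done; exfalso; lia.
  rewrite sum_eq /mono2; repeat (case: ifP => ?); try done; exfalso; lia.
rewrite T1 T2 T3 T4 T5 T6 in E.
exact: E.
Qed.

End Alg.

(* Both denominators have constant term 1, hence are invertible formal power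
   series; "F = N / D" is stated as "F * D = N". *)
Theorem lemma3p2 (d : nat) (hd : (1 <= d)%N) :
  (forall a b c : nat, mul3 (gf3 d) (den3 d) a b c = mul3 X3 Y3 a b c) /\
  (forall a b : nat, mul2 (gf2 d) (den2 d) a b = X2 a b).
Proof.
split=> *; [exact: main3 | exact: main2].
Qed.
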